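(* Let $\mathcal X$ be a countable set with the discrete topology. For every $P\in\Delta^*_{BD}$ and every path $\omega\in\Omega$, $\lim_{t\to\infty}P(\omega^t\mid\Omega)=0$.
   Context: $\Omega=\mathcal X^{\mathbb N}$ with the product topology; $\omega^t$ is the cylinder of paths agreeing with $\omega$ in the first $t$ coordinates ($\omega^0=\Omega$); $\mathcal H$ is the set of cylinders. $\Sigma$ is a $\sigma$-algebra containing all open sets; $\mathbb P$ the set of finitely additive probabilities on $(\Omega,\Sigma)$; $P\in\mathbb P$ is strongly nonatomic if for every $E\in\Sigma$, $\alpha\in[0,1]$ there is $F\in\Sigma$, $F\subseteq E$, with $P(F)=\alpha P(E)$. A conditional probability is a function $P:\Sigma\times\mathcal H\to[0,1]$ such that for every $t\ge0$, $\omega$: (1) $P(\cdot\mid\omega^t)\in\mathbb P$; (2) $P(\omega^t\mid\omega^t)=1$; (3) $P(E\cap\omega^{t+n}\mid\omega^t)=P(E\mid\omega^{t+n})P(\omega^{t+n}\mid\omega^t)$ for all $E$, $n\ge0$. It is a conditional opinion if $P(\cdot\mid\Omega)$ is strongly nonatomic. For conditional probabilities $P,Q$, $P$ merges with $Q$ if for every $\varepsilon>0$, $\lim_{t\to\infty}Q(\{\omega:\sup_{E\in\Sigma}|P(E\mid\omega^t)-Q(E\mid\omega^t)|>\varepsilon\}\mid\Omega)=0$. For $Q,R\in\mathbb P$, $Q\ll R$ means $R(E_n)\to0$ implies $Q(E_n)\to0$ for every sequence in $\Sigma$. A conditional probability $P$ has the Blackwell–Dubins property if for every $Q\in\mathbb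 P$ with $Q\ll P(\cdot\mid\Omega)$ there is a conditional probability $\widetilde Q$ with $\widetilde Q(\cdot\mid\Omega)=Q$ such that $P$ merges with $\widetilde Q$. $\Delta^*_{BD}$ is the set of conditional opinions with the Blackwell–Dubins property. *)

(* Defs.v *)
From Stdlib Require Import Reals.
Open Scope R_scope.
Set Implicit Arguments.

(* Omega = X^N ; events are predicates on paths. *)
Definition path (X : Type) := nat -> X.
Definition event (X : Type) := path X -> Prop.

Definition full (X : Type) : event X := fun _ => True.
Arguments full X : clear implicits.

Definition cyl (X : Type) (w : path X) (t : nat) : event X :=
  fun w' => forall i, (i < t)%nat -> w' i = w i.

Definition countable (X : Type) : Prop :=
  exists f : X -> nat, forall x y, f x = f y -> x = y.

(* Open sets of the product topology on X^N, X discrete: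
   U is open iff every point of U has a cylinder neighbourhood inside U
   (cylinders form a base of this topology). *)
Definition is_open (X : Type) (U : event X) : Prop :=
  forall w, U w -> exists t, forall w', cyl w t w' -> U w'.

Definition sigma_algebra {X : Type} (S : event X -> Prop) : Prop :=
  S (full X) /\
  (forall E, S E -> S (fun w => ~ E w)) /\
  (forall En : nat -> event X, (forall n, S (En n)) -> S (fun w => exists n, En n w)).

Definition admissible (X : Type) (S : event X -> Prop) : Prop :=
  sigma_algebra S /\ (forall U, is_open U -> S U).

(* Finitely additive probability on (Omega, Sigma); only values on Sigma matter. *)
Definition fa_prob (X : Type) (S : event X -> Prop) (P : event X -> R) : Prop :=
  (forall E, S E -> 0 <= P E) /\
  P (full X) = 1 /\
  (forall E F, S E -> S F -> (forall w, E w -> F w -> False) ->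
     P (fun w => E w \/ F w) = P E + P F).

Definition strongly_nonatomic (X : Type) (S : event X -> Prop) (P : event X -> R) : Prop :=
  forall E, S E -> forall alpha, 0 <= alpha <= 1 ->
    exists F, S F /\ (forall w, F w -> E w) /\ P F = alpha * P E.

(* Conditional probability: P E H, with H ranging over cylinders omega^t. *)
Definition cond_prob (X : Type) (S : event X -> Prop) (P : event X -> event X -> R) : Prop :=
  forall (t : nat) (w : path X),
    fa_prob S (fun E => P E (cyl w t)) /\
    P (cyl w t) (cyl w t) = 1 /\
    (forall E n, S E ->
       P (fun w' => E w' /\ cyl w (t + n) w') (cyl w t)
       = P E (cyl w (t + n)) * P (cyl w (t + n)) (cyl w t)).

Definition cond_opinion (X : Type) (S : event X -> Prop) (P : event X -> event X -> R) : Prop :=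
  cond_prob S P /\ strongly_nonatomic S (fun E => P E (full X)).

(* P merges with Q. The sup over E in Sigma exceeds eps iff some E in Sigma does. *)
Definition merges (X : Type) (S : event X -> Prop) (P Q : event X -> event X -> R) : Prop :=
  forall eps, eps > 0 ->
    Un_cv (fun t => Q (fun w => exists E, S E /\
                          Rabs (P E (cyl w t) - Q E (cyl w t)) > eps) (full X)) 0.

Definition abs_cont (X : Type) (S : event X -> Prop) (Q R0 : event X -> R) : Prop :=
  forall En : nat -> event X, (forall n, S (En n)) ->
    Un_cv (fun n => R0 (En n)) 0 -> Un_cv (fun n => Q (En n)) 0.

Definition blackwell_dubins (X : Type) (S : event X -> Prop) (P : event X -> event X -> R) : Prop :=
  forall Q : event X -> R, fa_prob S Q -> abs_cont S Q (fun E => P E (full X)) ->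
    exists Qt : event X -> event X -> R,
      cond_prob S Qt /\ (forall E, S E -> Qt E (full X) = Q E) /\ merges S P Qt.

Definition in_Delta_BD (X : Type) (S : event X -> Prop) (P : event X -> event X -> R) : Prop :=
  cond_opinion S P /\ blackwell_dubins S P.

(* Main.v *)
Require Import Defs.
From Stdlib Require Import Reals.
From Stdlib Require Import Lra Lia Classical ClassicalEpsilon FunctionalExtensionality PropExtensionality.
Open Scope R_scope.
Set Implicit Arguments.

Lemma ev_ext {X : Type} (E F : event X) : (forall w, E w <-> F w) -> E = F.
Proof. intro H; apply functional_extensionality; intro w; apply propositional_extensionality; auto. Qed.

Lemma S_compl X (S : event X -> Prop) : sigma_algebra S -> forall E, S E -> S (fun w => ~ E w).
Proof. intros [_ [H _]]; auto. Qed.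

Lemma S_union X (S : event X -> Prop) : sigma_algebra S -> forall E F, S E -> S F -> S (fun w => E w \/ F w).
Proof.
  intros HS E F HE HF. destruct HS as [_ [_ Hu]].
  set (En := fun n : nat => match n with O => E | _ => F end).
  assert (Heq : (fun w => E w \/ F w) = (fun w => exists n, En n w)).
  { apply ev_ext; intro w; split.
    - intros [h|h]; [exists O; exact h | exists 1%nat; exact h].
    - intros [n h]; destruct n; simpl in h; auto. }
  rewrite Heq; apply Hu; intro n; destruct n; simpl; auto.
Qed.

Lemma S_inter X (S : event X -> Prop) : sigma_algebra S -> forall E F, S E -> S F -> S (fun w => E w /\ F w).
Proof.
  intros HS E F HE HF.
  assert (Heq : (fun w => E w /\ F w) = (fun w => ~ ((~ E w) \/ (~ F w)))).
  { apply ev_ext; intro w; split.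
    - intros [a b] [c|c]; auto.
    - intro h; split; apply NNPP; intro c; apply h; auto. }
  rewrite Heq. apply S_compl; auto. apply S_union; auto; apply S_compl; auto.
Qed.

Lemma fa_split X (S : event X -> Prop) mu : sigma_algebra S -> fa_prob S mu ->
  forall F G, S F -> S G -> mu F = mu (fun w => F w /\ G w) + mu (fun w => F w /\ ~ G w).
Proof.
  intros HS [Hn [H1 Ha]] F G HF HG.
  assert (Heq : F = (fun w => (F w /\ G w) \/ (F w /\ ~ G w))).
  { apply ev_ext; intro w; split.
    - intro h; destruct (classic (G w)); auto.
    - intros [[h _]|[h _]]; auto. }
  rewrite Heq at 1. apply Ha.
  - apply S_inter; auto.
  - apply S_inter; auto; apply S_compl; auto.
  - intros w [_ a] [_ b]; auto.
Qed.

Lemma fa_mono X (S : event X -> Prop) mu : sigma_algebra S -> fa_prob S mu ->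
  forall E F, S E -> S F -> (forall w, E w -> F w) -> mu E <= mu F.
Proof.
  intros HS Hmu E F HE HF Hsub.
  rewrite (fa_split HS Hmu F E HF HE).
  assert (Heq : (fun w => F w /\ E w) = E).
  { apply ev_ext; intro w; split; [intros [_ h]; auto | intro h; auto]. }
  rewrite Heq. destruct Hmu as [Hn _].
  assert (0 <= mu (fun w => F w /\ ~ E w)) by (apply Hn; apply S_inter; auto; apply S_compl; auto).
  lra.
Qed.

Lemma fa_nonneg X (S : event X -> Prop) mu : fa_prob S mu -> forall E, S E -> 0 <= mu E.
Proof. intros [h _]; auto. Qed.

Definition glim (u : nat -> R) : R := epsilon (inhabits 0%R) (fun l => Un_cv u l).

Lemma glim_spec u l : Un_cv u l -> Un_cv u (glim u).
Proof. intro H. unfold glim. apply epsilon_spec. exists l; exact H. Qed.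

Lemma glim_eq u l : Un_cv u l -> glim u = l.
Proof. intro H. apply UL_sequence with u; [apply glim_spec with l|]; auto. Qed.

Lemma mono_cv (u : nat -> R) : (forall r, 0 <= u r) -> (forall r, u (S r) <= u r) -> Un_cv u (glim u).
Proof.
  intros H0 Hd. destruct (decreasing_cv u Hd) as [l Hl].
  - exists 0. intros x [i Hi]. unfold opp_seq in Hi. specialize (H0 i). lra.
  - apply glim_spec with l; exact Hl.
Qed.

Lemma lim_ge u l c : Un_cv u l -> (forall n, c <= u n) -> c <= l.
Proof.
  intros H Hc. destruct (Rle_or_lt c l) as [h|h]; auto.
  destruct (H (c - l)) as [N HN]; [lra|].
  specialize (HN N (le_n N)). specialize (Hc N). unfold Rdist in HN.
  unfold Rabs in HN; destruct Rcase_abs; lra.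
Qed.

Lemma lim_le u l c : Un_cv u l -> (forall n, u n <= c) -> l <= c.
Proof.
  intros H Hc. destruct (Rle_or_lt l c) as [h|h]; auto.
  destruct (H (l - c)) as [N HN]; [lra|].
  specialize (HN N (le_n N)). specialize (Hc N). unfold Rdist in HN.
  unfold Rabs in HN; destruct Rcase_abs; lra.
Qed.

Lemma decr_gen (u : nat -> R) : (forall r, u (S r) <= u r) -> forall n m, (n <= m)%nat -> u m <= u n.
Proof.
  intros Hd n m H. induction H; [lra|]. specialize (Hd m). lra.
Qed.

Lemma lim_le_decr u l : Un_cv u l -> (forall r, u (S r) <= u r) -> forall n, l <= u n.
Proof.
  intros H Hd n. destruct (Rle_or_lt l (u n)) as [h|h]; auto.
  destruct (H (l - u n)) as [N HN]; [lra|].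
  specialize (HN (max N n) ltac:(lia)).
  pose proof (@decr_gen u Hd n (max N n) ltac:(lia)). unfold Rdist in HN.
  unfold Rabs in HN; destruct Rcase_abs; lra.
Qed.

Lemma cv_evt (u v : nat -> R) l t : Un_cv u l -> (forall n, (n >= t)%nat -> v n = u n) -> Un_cv v l.
Proof.
  intros H He eps heps. destruct (H eps heps) as [N HN]. exists (max N t).
  intros n hn. rewrite He by lia. apply HN; lia.
Qed.

Lemma cyl_open X (w : path X) t : is_open (cyl w t).
Proof. intros w1 h1. exists t. intros w2 h2 i hi. rewrite h2 by exact hi. apply h1; exact hi. Qed.

Lemma cyl_same X (w w' : path X) t : cyl w t w' -> cyl w' t = cyl w t.
Proof.
  intro h; apply ev_ext; intro v; split; intros hv i hi.
  - rewrite hv by auto; apply h; auto.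
  - rewrite hv by auto; symmetry; apply h; auto.
Qed.

Definition hseq {X : Type} (mu : event X -> R) (F : event X) (w : path X) (E : event X) (r : nat) : R :=
  mu (fun v => E v /\ (F v /\ cyl w r v)).

Definition Qdef {X : Type} (mu : event X -> R) (F : event X) (w : path X) (LF : R) (E : event X) : R :=
  glim (hseq mu F w E) / LF.

Section Q.
Variables (X : Type) (S : event X -> Prop) (mu : event X -> R) (F : event X) (w : path X) (LF : R).
Hypotheses (HS : sigma_algebra S) (Hcyl : forall t, S (cyl w t)) (Hmu : fa_prob S mu) (HF : S F)
  (HLF : 0 < LF) (HLFcv : Un_cv (fun r => mu (fun v => F v /\ cyl w r v)) LF).

Lemma hseq_S E r : S E -> S (fun v => E v /\ (F v /\ cyl w r v)).
Proof. intro; apply S_inter; auto; apply S_inter; auto. Qed.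

Lemma hseq_cv E : S E -> Un_cv (hseq mu F w E) (glim (hseq mu F w E)).
Proof.
  intro HE. apply mono_cv.
  - intro r; apply (fa_nonneg Hmu); apply hseq_S; auto.
  - intro r; unfold hseq; apply (fa_mono HS Hmu); try apply hseq_S; auto.
    intros v [a [b c]]; repeat split; auto. intros i hi; apply c; lia.
Qed.

Lemma glim_nonneg E : S E -> 0 <= glim (hseq mu F w E).
Proof.
  intro HE. apply (lim_ge (hseq_cv HE)). intro r; apply (fa_nonneg Hmu); apply hseq_S; auto.
Qed.

Lemma glim_le E : S E -> glim (hseq mu F w E) <= mu E.
Proof.
  intro HE. apply (lim_le (hseq_cv HE)). intro r; unfold hseq; apply (fa_mono HS Hmu); auto.
  apply hseq_S; auto. intros v [a _]; auto.
Qed.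

Lemma Q_one E t : S E -> (forall r, (r >= t)%nat -> forall v, (E v /\ (F v /\ cyl w r v)) <-> (F v /\ cyl w r v)) ->
  Qdef mu F w LF E = 1.
Proof.
  intros HE Hiff. unfold Qdef.
  rewrite (@glim_eq (hseq mu F w E) LF).
  - field; lra.
  - apply cv_evt with (1 := HLFcv) (t := t). intros n hn. unfold hseq.
    f_equal. apply ev_ext. apply Hiff; auto.
Qed.

Lemma Q_fa : fa_prob S (Qdef mu F w LF).
Proof.
  split; [|split].
  - intros E HE. unfold Qdef, Rdiv. apply Rmult_le_pos; [apply glim_nonneg; auto|].
    left; apply Rinv_0_lt_compat; auto.
  - apply (@Q_one (full X) 0); [destruct HS; auto|]. intros r _ v; split; [intros [_ h]; auto|].
    intro h; split; [exact I|auto].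
  - intros E G HE HG Hd. unfold Qdef.
    assert (Hp : forall r, hseq mu F w (fun v => E v \/ G v) r = hseq mu F w E r + hseq mu F w G r).
    { intro r. unfold hseq. destruct Hmu as [_ [_ Ha]]. rewrite <- Ha; try apply hseq_S; auto.
      - f_equal. apply ev_ext; intro v; split.
        + intros [[a|a] b]; auto.
        + intros [[a b]|[a b]]; auto.
      - intros v [a _] [b _]; eauto. }
    rewrite (@glim_eq (hseq mu F w (fun v => E v \/ G v)) (glim (hseq mu F w E) + glim (hseq mu F w G))).
    + field; lra.
    + apply cv_evt with (t := 0%nat) (u := fun i => hseq mu F w E i + hseq mu F w G i).
      * apply CV_plus; apply hseq_cv; auto.
      * intros n _; apply Hp.
Qed.

Lemma Q_ac : abs_cont S (Qdef mu F w LF) mu.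
Proof.
  intros En HEn Hcv eps heps. destruct (Hcv (eps * LF)) as [N HN]; [nra|].
  exists N. intros n hn. specialize (HN n hn). unfold Rdist in *.
  pose proof (glim_nonneg (HEn n)). pose proof (glim_le (HEn n)).
  rewrite Rminus_0_r in *. unfold Qdef.
  assert (Hq : 0 <= glim (hseq mu F w (En n)) / LF).
  { unfold Rdiv; apply Rmult_le_pos; auto. left; apply Rinv_0_lt_compat; auto. }
  rewrite Rabs_right by lra.
  assert (mu (En n) < eps * LF) by (unfold Rabs in HN; destruct Rcase_abs; lra).
  apply Rmult_lt_reg_r with LF; auto. unfold Rdiv. rewrite Rmult_assoc, Rinv_l, Rmult_1_r; lra.
Qed.

End Q.

Unset Implicit Arguments.

Theorem mainTheorem13 (X : Type) (HX : countable X) (S : event X -> Prop)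
  (HS : admissible S) (P : event X -> event X -> R) (HP : in_Delta_BD S P) :
  forall w : path X, Un_cv (fun t => P (cyl w t) (full X)) 0.
Proof.
  intro w.
  destruct HS as [HSa HSo].
  destruct HP as [[HPc HPna] HBD].
  pose (Pf := fun E => P E (full X)).
  assert (cyl0 : forall v : path X, cyl v 0 = full X).
  { intro v; apply ev_ext; intro w'; split; [intros; exact I | intros _ i hi; lia]. }
  assert (HPf : fa_prob S Pf).
  { destruct (HPc 0%nat w) as [h _]. rewrite cyl0 in h. exact h. }
  assert (Hcyl : forall v t, S (cyl v t)) by (intros; apply HSo; apply cyl_open).
  assert (Hm0 : forall t, 0 <= Pf (cyl w t)) by (intro; apply (fa_nonneg HPf); auto).
  assert (Hmd : forall t, Pf (cyl w (Datatypes.S t)) <= Pf (cyl w t)).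
  { intro t; apply (fa_mono HSa HPf); auto. intros v hv i hi; apply hv; lia. }
  pose proof (mono_cv _ Hm0 Hmd) as HL.
  set (L := glim (fun t => Pf (cyl w t))) in *.
  assert (HL0 : 0 <= L) by (apply (lim_ge HL); auto).
  assert (HLle : forall t, L <= Pf (cyl w t)) by (apply (lim_le_decr HL); auto).
  destruct (Req_dec L 0) as [HL00|HLn0]; [rewrite HL00 in HL; exact HL|].
  assert (HLp : 0 < L) by lra.
  exfalso.
  destruct (HL L HLp) as [s Hs]. specialize (Hs s (le_n s)).
  assert (Hms : Pf (cyl w s) < 2 * L).
  { unfold Rdist in Hs; unfold Rabs in Hs; destruct Rcase_abs; lra. }
  destruct (HPna (cyl w s) (Hcyl w s) (1/2)) as [F [HF [HFsub HPfF]]]; [lra|].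
  change (Pf F = 1/2 * Pf (cyl w s)) in HPfF.
  set (ms := Pf (cyl w s)) in *.
  assert (HSFc : forall r, S (fun v => F v /\ cyl w r v)) by (intro; apply S_inter; auto).
  assert (Hg0 : forall r, 0 <= Pf (fun v => F v /\ cyl w r v)) by (intro; apply (fa_nonneg HPf); auto).
  assert (Hgd : forall r, Pf (fun v => F v /\ cyl w (Datatypes.S r) v) <= Pf (fun v => F v /\ cyl w r v)).
  { intro r; apply (fa_mono HSa HPf); auto. intros v [a hv]; split; auto; intros i hi; apply hv; lia. }
  pose proof (mono_cv _ Hg0 Hgd) as HLFcv.
  set (LF := glim (fun r => Pf (fun v => F v /\ cyl w r v))) in *.
  assert (Hgs : forall r, (r >= s)%nat -> L - ms / 2 <= Pf (fun v => F v /\ cyl w r v)).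
  { intros r hr.
    pose proof (fa_split HSa HPf F (cyl w r) HF (Hcyl w r)) as Hsp.
    assert (H1 : Pf (fun v => F v /\ ~ cyl w r v) <= Pf (fun v => cyl w s v /\ ~ cyl w r v)).
    { apply (fa_mono HSa HPf); try (apply S_inter; auto; apply S_compl; auto).
      intros v [a b]; split; auto. }
    pose proof (fa_split HSa HPf (cyl w s) (cyl w r) (Hcyl w s) (Hcyl w r)) as Hsp2.
    assert (Heq : (fun v => cyl w s v /\ cyl w r v) = cyl w r).
    { apply ev_ext; intro v; split; [intros [_ h]; auto|intro h; split; auto].
      intros i hi; apply h; lia. }
    rewrite Heq in Hsp2. specialize (HLle r). fold ms in Hsp2. lra. }
  assert (Hgall : forall r, L - ms / 2 <= Pf (fun v => F v /\ cyl w r v)).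
  { intro r. destruct (Compare_dec.le_lt_dec s r) as [h|h]; [apply Hgs; lia|].
    pose proof (Hgs s (le_n s)). pose proof (@decr_gen _ Hgd r s ltac:(lia)). lra. }
  assert (HLFp : 0 < LF).
  { pose proof (lim_ge HLFcv Hgall). lra. }
  pose (Q := Qdef Pf F w LF).
  assert (HQfa : fa_prob S Q) by (apply (Q_fa F w HSa (Hcyl w) HPf HF HLFp HLFcv)).
  assert (HQac : abs_cont S Q Pf) by (apply (Q_ac F w HSa (Hcyl w) HPf HF HLFp)).
  destruct (HBD Q HQfa HQac) as [Qt [HQtc [HQtQ Hmerge]]].
  assert (HQcyl : forall t, Q (cyl w t) = 1).
  { intro t. apply (Q_one S Pf F HLFp HLFcv (cyl w t) (t := t)); auto.
    intros r hr v; split; [intros [_ h]; auto|intros [a b]; repeat split; auto].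
    intros i hi; apply b; lia. }
  assert (HQFcyl : forall t, Q (fun v => F v /\ cyl w t v) = 1).
  { intro t. apply (Q_one S Pf F HLFp HLFcv (fun v => F v /\ cyl w t v) (t := t)); auto.
    intros r hr v; split; [intros [_ h]; auto|intros [a b]; repeat split; auto].
    intros i hi; apply b; lia. }
  assert (HQtF : forall t, Qt F (cyl w t) = 1).
  { intro t. destruct (HQtc 0%nat w) as [_ [_ H3]].
    specialize (H3 F t HF). rewrite Nat.add_0_l, cyl0 in H3.
    rewrite HQtQ in H3 by auto. rewrite HQtQ in H3 by auto.
    rewrite HQFcyl, HQcyl in H3. lra. }
  assert (HPFt : forall t, P F (cyl w t) <= ms / (2 * L)).
  { intro t. destruct (HPc 0%nat w) as [_ [_ H3]].
    specialize (H3 F t HF). rewrite Nat.add_0_l, cyl0 in H3.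
    destruct (HPc t w) as [[Hn _] _]. specialize (Hn F HF). simpl in Hn.
    assert (Hle : Pf (fun v => F v /\ cyl w t v) <= Pf F).
    { apply (fa_mono HSa HPf); auto. intros v [a _]; auto. }
    unfold Pf in Hle, HPfF. rewrite H3 in Hle. specialize (HLle t). unfold Pf in HLle.
    fold ms in HPfF.
    apply Rmult_le_reg_r with (2 * L); [lra|].
    unfold Rdiv. rewrite Rmult_assoc, Rinv_l, Rmult_1_r by lra.
    nra. }
  set (eps := (2 * L - ms) / (4 * L)).
  assert (Heps : eps > 0).
  { unfold eps, Rdiv. apply Rmult_gt_0_compat; [lra|apply Rinv_0_lt_compat; lra]. }
  assert (Hgap : forall t, Rabs (P F (cyl w t) - Qt F (cyl w t)) > eps).
  { intro t. rewrite HQtF. specialize (HPFt t).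
    assert (Hc : ms / (2 * L) < 1).
    { apply Rmult_lt_reg_r with (2 * L); [lra|]. unfold Rdiv.
      rewrite Rmult_assoc, Rinv_l, Rmult_1_r by lra. lra. }
    assert (Hk : 1 - ms / (2 * L) = 2 * eps) by (unfold eps; field; lra).
    unfold Rabs; destruct Rcase_abs; lra. }
  destruct (Hmerge eps Heps (1/2)) as [N HN]; [lra|].
  specialize (HN N (le_n N)).
  set (A := fun v : path X => exists E, S E /\ Rabs (P E (cyl v N) - Qt E (cyl v N)) > eps) in *.
  assert (HA : S A).
  { apply HSo. intros w1 h1. exists N. intros w2 h2. unfold A. rewrite (cyl_same h2). exact h1. }
  assert (HsubA : forall v, cyl w N v -> A v).
  { intros v hv. exists F. split; auto. rewrite (cyl_same hv). apply Hgap. }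
  assert (HQA : 1 <= Q A).
  { rewrite <- (HQcyl N). apply (fa_mono HSa HQfa); auto. }
  rewrite HQtQ in HN by auto.
  unfold Rdist in HN; unfold Rabs in HN; destruct Rcase_abs; lra.
Qed.
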